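(* Let $m\ge1$, let $\lambda_1\ge0$ and $\lambda_2\ge0$, and let $f_1,\dots,f_m$ be real numbers ordered so that $|f_1|\le|f_2|\le\cdots\le|f_m|$. Then there exist real numbers $\xi_{i0}\in[-\lambda_1,\lambda_1]$ for $i=1,\dots,m$ and real numbers $\xi_{ij}\in[-\lambda_2,\lambda_2]$ for $i\ne j\in\{1,\dots,m\}$, satisfying $|\xi_{ij}|+|\xi_{ji}|\le\lambda_2$ for all $i\neq j$, such that $$f_i+\xi_{i0}+\sum_{j\in\{1,\dots,m\}\setminus\{i\}}\xi_{ij}=0,\qquad i=1,\dots,m,$$ if and only if $$\sum_{j=k+1}^{m}|f_j|\le\lambda_1(m-k)+\lambda_2\frac{(m-k)(m+k-1)}{2}\quad\text{for }k=0,\dots,m-1.$$ *)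

(* Defs.v *)
From mathcomp Require Import all_boot all_order all_algebra.
From mathcomp Require Import reals.
Set Implicit Arguments. Unset Strict Implicit. Unset Printing Implicit Defensive.

(* Main.v *)
Require Import Defs.
From mathcomp Require Import all_boot all_order all_algebra.
From mathcomp Require Import reals.
From mathcomp Require Import topology normedtype.
From mathcomp Require Import lra ring zify.
Import Order.TTheory GRing.Theory Num.Theory Num.Def.
Local Open Scope ring_scope.


Lemma sum_cont (R : realType) (m : nat) (g : nat -> R -> R) :
  (forall j, continuous (g j : R^o -> R^o)) ->
  continuous ((fun L => \sum_(j < m) g j L) : R^o -> R^o).
Proof.
move=> hg; elim: m => [|m IH].
  have -> : (fun L : R => \sum_(j < 0) g j L) = fun=> 0.
    by apply: boolp.funext => L; rewrite big_ord0.
  by move=> x; apply: cst_continuous.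
have -> : (fun L : R => \sum_(j < m.+1) g j L) =
   (fun L => (\sum_(j < m) g j L) + g m L).
  by apply: boolp.funext => L; rewrite big_ord_recr.
move=> x; apply: (@continuousD _ _ _ (fun L : R^o => \sum_(j < m) g j L : R^o) (g m)).
  by apply: IH.
by apply: hg.
Qed.

Lemma water (R : realType) (l : R) (m : nat) (e : nat -> R) (D : R) :
  0 <= l -> 0 <= D -> D <= m%:R * l ->
  exists L, \sum_(j < m) minr (maxr (L - e j) 0) l = D.
Proof.
move=> l0 D0 Dm.
set F := fun L => \sum_(j < m) minr (maxr (L - e j) 0) l.
set M := \sum_(j < m) `|e j|.
have eM : forall j : 'I_m, `|e j| <= M.
  move=> j; rewrite /M (bigD1 j) //= lerDl; apply: sumr_ge0 => *; exact: normr_ge0.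
have Fa : F (- M) = 0.
  rewrite /F big1 // => j _.
  have : e j >= - M by rewrite lerNl; apply: le_trans (eM j); rewrite -normrN ler_norm.
  move=> h; rewrite (_ : maxr _ _ = 0); first by rewrite min_l.
  by apply/max_idPr; rewrite subr_le0.
have Fb : F (M + l) = m%:R * l.
  rewrite /F (eq_bigr (fun=> l)); first by rewrite sumr_const card_ord mulr_natl.
  move=> j _.
  have h : e j <= M by apply: le_trans (eM j); rewrite ler_norm.
  have h2 : l <= M + l - e j by lra.
  rewrite (_ : maxr _ _ = M + l - e j); first by rewrite min_r.
  by apply/max_idPl; lra.
have M0 : 0 <= M by apply: sumr_ge0 => *; exact: normr_ge0.
have [c _ Fc] : exists2 c, c \in `[(- M), M + l] & F c = D.
  apply: IVT; first by lra.
    have hF : continuous (F : R^o -> R^o).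
    rewrite /F.
    apply: (@sum_cont R m (fun j L => minr (maxr (L - e j) 0) l)) => j x.
    apply: continuous_min; last exact: cst_continuous.
    apply: continuous_max; last exact: cst_continuous.
    apply: continuousB; last exact: cst_continuous.
    done.
    exact: (continuous_subspaceT hF).
  rewrite Fa Fb; apply/andP; split.
    by rewrite ge_min D0.
  by rewrite le_max Dm orbT.
by exists c.
Qed.


Definition Pm (R : realType) (m n : nat) : R := n%:R * (2 * m%:R - n%:R - 1) / 2.
Definition cnt m (s : pred nat) := (\sum_(j < m | s j) 1)%N.

Lemma sumS (R : realType) m (s : pred nat) (F : nat -> R) :
  \sum_(j < m.+1 | s j) F j = \sum_(j < m | s j) F j + (if s m then F m else 0).
Proof. by rewrite big_mkcond big_ord_recr /= -big_mkcond. Qed.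

Lemma cntS m (s : pred nat) : cnt m.+1 s = (cnt m s + (s m))%N.
Proof. by rewrite /cnt big_mkcond big_ord_recr /= -big_mkcond; case: (s m). Qed.

Lemma sum_restr (R : realType) m (s : pred nat) (F : nat -> R) :
  \sum_(j < m | s j && ((j : nat) != m)) F j = \sum_(j < m | s j) F j.
Proof. by apply: eq_bigl => j; rewrite (ltn_eqF (ltn_ord j)) andbT. Qed.

Lemma cnt_restr m (s : pred nat) : cnt m (fun j => s j && (j != m)) = cnt m s.
Proof. by rewrite /cnt; apply: eq_bigl => j; rewrite (ltn_eqF (ltn_ord j)) andbT. Qed.

Lemma sum_cst (R : realType) m (s : pred nat) (x : R) :
  \sum_(j < m | s j) x = (cnt m s)%:R * x.
Proof. by rewrite /cnt natr_sum mulr_suml; apply: eq_bigr => j _; rewrite mul1r. Qed.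

Lemma cntID m (s a : pred nat) :
  cnt m s = (cnt m (fun j => s j && a j) + cnt m (fun j => s j && ~~ a j))%N.
Proof. by rewrite /cnt (bigID (fun j : 'I_m => a j)). Qed.

Lemma Hrestr (R : realType) (l : R) m (e : nat -> R) (s : pred nat) :
  (forall s : pred nat, \sum_(j < m.+1 | s j) e j <= l * Pm R m.+1 (cnt m.+1 s)) ->
  \sum_(j < m | s j) e j <= l * Pm R m.+1 (cnt m s).
Proof.
move=> H; have := H (fun j => s j && (j != m)).
rewrite (@sumS _ m (fun j => s j && (j != m))) cntS /= eqxx andbF addr0 addn0 sum_restr cnt_restr.
by [].
Qed.

Lemma concave (R : realType) (M : nat) (l X u k s2 : R) :
  0 <= l -> 0 <= k -> 0 <= s2 ->
  X <= l * (u * (2 * M%:R - u - 1) / 2) + k * X ->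
  True.
Proof. by []. Qed.

Lemma PmE (R : realType) M n : Pm R M n = n%:R * (2 * M%:R - n%:R - 1) / 2.
Proof. by []. Qed.

Lemma combine (R : realType) (M : nat) (l X L : R) (u k s2 : nat) :
  0 <= l ->
  X <= l * Pm R M u + k%:R * L ->
  X <= l * Pm R M (u + k + s2) - s2%:R * L ->
  X <= l * Pm R M (u + k).
Proof.
move=> l0 h1 h2.
have [k0|kpos] := eqVneq k 0%N.
  by move: h1; rewrite k0 addn0 mul0r addr0.
move: h1 h2; rewrite !PmE !natrD.
set U := u%:R; set K := k%:R; set S := s2%:R; set MM := M%:R.
have K0 : 0 < K by rewrite ltr0n lt0n.
have S0 : 0 <= S by rewrite ler0n.
move=> h1 h2.
have e1 : (K + S) * X <= S * (l * (U * (2 * MM - U - 1) / 2) + K * L)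
   + K * (l * ((U + K + S) * (2 * MM - (U + K + S) - 1) / 2) - S * L).
  by nra.
have e2 : S * (l * (U * (2 * MM - U - 1) / 2) + K * L)
   + K * (l * ((U + K + S) * (2 * MM - (U + K + S) - 1) / 2) - S * L)
   = (K + S) * (l * ((U + K) * (2 * MM - (U + K) - 1) / 2)) - l * (K * S * (K + S)) / 2.
  by field.
have e3 : 0 <= l * (K * S * (K + S)) / 2.
  by apply: divr_ge0 => //; apply: mulr_ge0 => //; apply: mulr_ge0; [apply: mulr_ge0|]; lra.
have : (K + S) * X <= (K + S) * (l * ((U + K) * (2 * MM - (U + K) - 1) / 2)) by lra.
by rewrite ler_pM2l //; lra.
Qed.

Lemma cnt_eq m (s t : pred nat) : (forall j, (j < m)%N -> s j = t j) -> cnt m s = cnt m t.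
Proof. by move=> h; rewrite /cnt; apply: eq_bigl => j; apply: h. Qed.

Lemma sum_eql (R : realType) m (s t : pred nat) (F : nat -> R) :
  (forall j, (j < m)%N -> s j = t j) ->
  \sum_(j < m | s j) F j = \sum_(j < m | t j) F j.
Proof. by move=> h; apply: eq_bigl => j; apply: h. Qed.

Lemma cnt_all m : cnt m predT = m.
Proof. by rewrite /cnt sum1_card card_ord. Qed.



Lemma step (R : realType) (l : R) (m : nat) (e : nat -> R) : 0 <= l ->
 (forall s : pred nat, \sum_(j < m.+1 | s j) e j <= l * Pm R m.+1 (cnt m.+1 s)) ->
 exists c : nat -> R, (forall j, 0 <= c j <= l) /\ e m <= \sum_(j < m) c j /\
  forall s : pred nat, \sum_(j < m | s j) (e j + c j) <= l * Pm R m.+1 (cnt m s).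
Proof.
move=> l0 H.
have [em0|em0] := lerP (e m) 0.
  exists (fun=> 0); split; first by move=> j; rewrite lexx.
  split; first by rewrite big1.
  by move=> s; under eq_bigr do rewrite addr0; exact: Hrestr.
have emm : e m <= m%:R * l.
  have := H (fun j => j == m).
  rewrite (@sumS _ m (fun j => j == m)) eqxx big_pred0; last first.
    by move=> j; rewrite /= (ltn_eqF (ltn_ord j)).
  rewrite cntS eqxx (_ : cnt m _ = 0%N); last first.
    by rewrite /cnt big_pred0 // => j; rewrite /= (ltn_eqF (ltn_ord j)).
  rewrite PmE add0r add0n /=.
  have -> : (2 * m.+1%:R - 1%:R - 1) = 2 * (m%:R : R) by rewrite -addn1 natrD; ring.
  lra.
have [L hL] := @water R l m e (e m) l0 (ltW em0) emm.
pose c := fun j => minr (maxr (L - e j) 0) l.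
have c0 : forall j, 0 <= c j by move=> j; rewrite /c le_min le_max lexx orbT.
have cl : forall j, c j <= l by move=> j; rewrite /c ge_min lexx orbT.
exists c; split; first by move=> j; rewrite c0 cl.
split; first by rewrite hL.
move=> s.
pose U := fun j => L <= e j.
have b1 : \sum_(j < m | s j) (e j + c j) <=
    l * Pm R m.+1 (cnt m (fun j => s j && U j))
    + (cnt m (fun j => s j && ~~ U j))%:R * L.
  rewrite (bigID (fun j : 'I_m => U j)) /=; apply: lerD.
    rewrite (eq_bigr (fun j : 'I_m => e j)); last first.
      move=> j /andP [_ hU]; rewrite /c (_ : maxr (L - e j) 0 = 0); first by rewrite min_l // addr0.
      by apply/max_idPr; rewrite subr_le0.
    exact: (@Hrestr _ l m e (fun j => s j && U j) H).
  rewrite -sum_cst; apply: ler_sum => j /andP [_ hU].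
  have h1 : c j <= maxr (L - e j) 0 by rewrite /c ge_min lexx.
  have h2 : maxr (L - e j) 0 = L - e j.
    by apply/max_idPl; rewrite subr_ge0; rewrite /U -ltNge in hU; apply: ltW.
  lra.
pose S := fun j => s j || (c j < l).
pose NS := fun j => ~~ S j.
have mS : m = (cnt m S + cnt m NS)%N.
  by rewrite -{1}(cnt_all m) (cntID m predT S).
have sumc : \sum_(j < m | S j) c j = e m - l * (cnt m NS)%:R.
  have hL' : \sum_(j < m) c j = e m by [].
  have sp : \sum_(j < m) c j = \sum_(j < m | S j) c j + \sum_(j < m | ~~ S j) c j.
    by rewrite (bigID (fun j : 'I_m => S j)).
  rewrite -hL' sp.
  have -> : \sum_(i < m | ~~ S i) c i = l * (cnt m NS)%:R.
    rewrite mulrC -sum_cst; apply: eq_bigr => j.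
    rewrite /S negb_or -leNgt => /andP [_ h].
    by apply/eqP; rewrite eq_le cl h.
  by rewrite addrK.
have hSb : \sum_(j < m | S j) (e j + c j) <= l * Pm R m.+1 (cnt m S).
  have := H (fun j => (j == m) || S j).
  rewrite (@sumS _ m (fun j => (j == m) || S j)) cntS /= eqxx /=.
  rewrite (@sum_eql _ m (fun j => (j == m) || S j) S); last first.
    by move=> j hj; rewrite (ltn_eqF hj).
  rewrite (@cnt_eq m (fun j => (j == m) || S j) S); last first.
    by move=> j hj; rewrite (ltn_eqF hj).
  move=> hA; rewrite big_split /= sumc.
  have Mc : (m.+1%:R : R) = (cnt m S)%:R + (cnt m NS)%:R + 1.
    by rewrite {1}mS -addn1 !natrD.
  have key : Pm R m.+1 (cnt m S + 1) = Pm R m.+1 (cnt m S) + (cnt m NS)%:R.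
    by rewrite !PmE Mc natrD; field.
  rewrite key in hA; lra.
have split1 : \sum_(j < m | S j) (e j + c j) = \sum_(j < m | s j) (e j + c j)
    + \sum_(j < m | S j && ~~ s j) (e j + c j).
  rewrite (bigID (fun j : 'I_m => s j)) /=; congr (_ + _).
  by apply: eq_bigl => j; rewrite /S /=; case: (s j); rewrite ?andbF.
have cntsplit : cnt m S = (cnt m s + cnt m (fun j => S j && ~~ s j))%N.
  rewrite (cntID m S s); congr (_ + _)%N.
  by apply: cnt_eq => j _; rewrite /S /=; case: (s j); rewrite ?andbF.
have b2 : (cnt m (fun j => S j && ~~ s j))%:R * L <=
    \sum_(j < m | S j && ~~ s j) (e j + c j).
  rewrite -sum_cst; apply: ler_sum => j /andP [hS hs].
  have hc : c j < l by move: hS; rewrite /S (negbTE hs).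
  have hx : maxr (L - e j) 0 < l by move: hc; rewrite /c gt_min ltxx orbF.
  have -> : c j = maxr (L - e j) 0 by rewrite /c min_l // ltW.
  have : L - e j <= maxr (L - e j) 0 by rewrite le_max lexx.
  lra.
have cnts := cntID m s U.
rewrite cnts.
apply: (@combine R m.+1 l _ L _ _ (cnt m (fun j => S j && ~~ s j)) l0).
  exact: b1.
rewrite -cnts -cntsplit; lra.
Qed.

Lemma PmS (R : realType) m n : Pm R m.+1 n = Pm R m n + n%:R.
Proof. by rewrite !PmE -addn1 natrD; field. Qed.

Lemma core (R : realType) (l : R) : 0 <= l -> forall m (e : nat -> R),
 (forall s : pred nat, \sum_(j < m | s j) e j <= l * Pm R m (cnt m s)) ->
 exists a : nat -> nat -> R, (forall i j, 0 <= a i j) /\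
  (forall i j, i != j -> a i j + a j i <= l) /\
  (forall i, (i < m)%N -> e i <= \sum_(j < m | (j : nat) != i) a i j).
Proof.
move=> hl m; elim: m => [|m IH] e H.
  exists (fun _ _ => 0); split; first by move=> *; rewrite lexx.
  by split; first by move=> *; rewrite addr0.
have [c [hc [hcm hcs]]] := @step R l m e hl H.
pose e' := fun j => e j + c j - l.
have H' : forall s : pred nat, \sum_(j < m | s j) e' j <= l * Pm R m (cnt m s).
  move=> s; have := hcs s; rewrite /e' sumrB sum_cst PmS; lra.
have [a' [ha0 [ha1 ha2]]] := IH e' H'.
pose a := fun i j : nat => if (i < m)%N && (j < m)%N then a' i j
  else if (i == m) && (j < m)%N then c j
  else if (j == m) && (i < m)%N then l - c i else 0.
exists a; split.
  move=> i j; rewrite /a.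
  case: ifP => _; first exact: ha0.
  case: ifP => _; first by case/andP: (hc j).
  case: ifP => _; last by [].
  by case/andP: (hc i) => _ h; rewrite subr_ge0.
split.
  move=> i j ij; rewrite /a.
  case: (ltngtP i m) => hi; case: (ltngtP j m) => hj /=.
  all: try exact: ha1.
  all: try first [ move: (hc i) (hc j) => /andP [? ?] /andP [? ?]; lra | move: (hc i) => /andP [? ?]; lra | move: (hc j) => /andP [? ?]; lra | lra ].
move=> i; rewrite ltnS leq_eqVlt => /orP [/eqP ->|him].
  rewrite (@sumS _ m (fun j => j != m)) eqxx addr0.
  rewrite (@sum_eql _ m (fun j => j != m) predT (a m)); last by move=> j hj; rewrite /= (ltn_eqF hj).
  apply: le_trans hcm _; apply: ler_sum => j _.
  by rewrite /a ltnn /= eqxx ltn_ord.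
rewrite (@sumS _ m (fun j => j != i)) (gtn_eqF him).
have -> : a i m = l - c i by rewrite /a ltnn andbF (ltn_eqF him) eqxx him.
have -> : \sum_(j < m | (j : nat) != i) a i j = \sum_(j < m | (j : nat) != i) a' i j.
  by apply: eq_bigr => j _; rewrite /a him ltn_ord.
have := ha2 i him; rewrite /e' /=; lra.
Qed.
Lemma cnt_le m s : (cnt m s <= m)%N.
Proof.
elim: m => [|m IH]; first by rewrite /cnt big_ord0.
by rewrite cntS; case: (s m) => /=; lia.
Qed.

Lemma cnt_ge m k : cnt m (fun j => (k <= j)%N) = (m - k)%N.
Proof.
elim: m => [|m IH]; first by rewrite /cnt big_ord0.
rewrite cntS IH /=; case: leqP => h /=; lia.
Qed.

Lemma subset_top (R : realType) (M : nat) (d : nat -> R) :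
 (forall i j, (i <= j)%N -> (j < M)%N -> d i <= d j) ->
 forall m, (m <= M)%N -> forall s : pred nat,
 \sum_(j < m | s j) d j <= \sum_(j < m | (m - cnt m s <= j)%N) d j.
Proof.
move=> hd; elim=> [|m IH] hm s; first by rewrite !big_ord0.
have hm' : (m <= M)%N by lia.
rewrite sumS cntS.
case hs: (s m) => /=.
  rewrite sumS (_ : (m.+1 - (cnt m s + 1) <= m)%N = true); last by lia.
  rewrite (_ : (m.+1 - (cnt m s + 1)) = m - cnt m s)%N; last first.
    have := cnt_le m s; lia.
  by rewrite lerD2r; apply: IH.
rewrite addr0 addn0.
have hc := cnt_le m s.
apply: le_trans (IH hm' s) _.
rewrite [X in _ <= X]big_mkcond big_ord_recl /=.
rewrite (_ : (m.+1 - cnt m s <= 0)%N = false); last by lia.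
rewrite add0r [X in X <= _]big_mkcond /=; apply: ler_sum => i _.
rewrite /bump /= add1n.
rewrite (_ : (m.+1 - cnt m s <= i.+1)%N = (m - cnt m s <= i)%N); last first.
  apply/idP/idP; lia.
case: ifP => // _; apply: hd => //.
have := ltn_ord i; lia.
Qed.


Theorem theorem2 (R : realType) (m : nat) (lambda1 lambda2 : R)
  (f : 'I_m -> R) :
  (1 <= m)%N -> 0 <= lambda1 -> 0 <= lambda2 ->
  (forall i j : 'I_m, (i <= j)%N -> `|f i| <= `|f j|) ->
  (exists (xi0 : 'I_m -> R) (xi : 'I_m -> 'I_m -> R),
      (forall i, `|xi0 i| <= lambda1) /\
      (forall i j, i != j -> `|xi i j| <= lambda2) /\
      (forall i j, i != j -> `|xi i j| + `|xi j i| <= lambda2) /\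
      (forall i, f i + xi0 i + \sum_(j < m | j != i) xi i j = 0))
  <->
  (forall k : nat, (k < m)%N ->
      \sum_(j < m | (k <= j)%N) `|f j|
        <= lambda1 * (m - k)%:R
           + lambda2 * (((m - k) * (m + k - 1))%:R / 2)).
Proof.
move=> m1 hl1 hl2 hf; split.
  move=> [xi0 [xi [hx0 [hxl [hxp hrow]]]]] k hk.
  pose T := fun j : nat => (k <= j)%N.
  pose g := fun j i : 'I_m => `|xi j i|.
  have h1 : forall j : 'I_m, `|f j| <= `|xi0 j| + \sum_(i < m | i != j) g j i.
    move=> j.
    have -> : f j = - (xi0 j + \sum_(i < m | i != j) xi j i) by have := hrow j; lra.
    rewrite normrN; apply: le_trans (ler_normD _ _) _; rewrite lerD2l.
    exact: ler_norm_sum.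
  pose nT := cnt m T.
  pose nN := cnt m (fun j => ~~ T j).
  have hnT : nT = (m - k)%N by apply: cnt_ge.
  have hnm : (nT + nN)%N = m.
    have := cntID m predT T; rewrite cnt_all => ->.
    by congr addn; apply: cnt_eq.
  pose A := \sum_(j < m | T j) \sum_(i < m | T i) (if i != j then g j i else 0).
  pose B := \sum_(j < m | T j) \sum_(i < m | ~~ T i) g j i.
  have hmain : \sum_(j < m | T j) `|f j| <= nT%:R * lambda1 + A + B.
    apply: le_trans (ler_sum _ (fun j _ => h1 j)) _.
    rewrite big_split /= -addrA lerD //.
      by rewrite -sum_cst; apply: ler_sum => j _; apply: hx0.
    rewrite /A /B -big_split /=; apply: ler_sum => j Tj.
    rewrite (bigID (fun i : 'I_m => T i)) /=; apply: lerD.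
      rewrite (eq_bigl (fun i : 'I_m => T i && (i != j))); last first.
        by move=> i; rewrite andbC.
      by rewrite big_mkcondr.
    by rewrite le_eqVlt; apply/orP; left; apply/eqP; apply: eq_bigl => i;
      case hi: (T i); rewrite ?andbF ?andbT //; apply/eqP => ij; move: hi; rewrite ij Tj.
  have hB : B <= nT%:R * (nN%:R * lambda2).
    rewrite -sum_cst; apply: ler_sum => j Tj.
    rewrite -sum_cst; apply: ler_sum => i Ti; apply: hxl.
    by apply/eqP => ij; move: Ti; rewrite -ij Tj.
  have hA : A + A <= nT%:R * ((nT%:R - 1) * lambda2).
    have eA : A = \sum_(j < m | T j) \sum_(i < m | T i) (if j != i then g i j else 0).
      by rewrite /A exchange_big.
    rewrite {2}eA.
    rewrite /A -big_split /= -sum_cst; apply: ler_sum => j Tj.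
    rewrite -big_split /=.
    have -> : (nT%:R - 1) * lambda2 = \sum_(i < m | T i) (if i != j then lambda2 else 0).
      rewrite (bigD1 j Tj) /= eqxx add0r.
      rewrite (eq_bigr (fun=> lambda2)); last by move=> i /andP [_ ->].
      have := @sum_cst R m T lambda2; rewrite (bigD1 j Tj) /= => hh.
      have : \sum_(i < m | T i && (i != j)) lambda2 = nT%:R * lambda2 - lambda2 by rewrite -hh; ring.
      by move=> ->; ring.
    apply: ler_sum => i Ti; case: ifP => ij; rewrite eq_sym ij; last by rewrite add0r.
    by apply: hxp; rewrite eq_sym ij.
  have ek : nN = k by lia.
  have e5 : (m + k - 1 + 1 = nT + 2 * nN)%N by lia.
  have e5R := congr1 (fun x => x%:R : R) e5.
  rewrite /= !natrD in e5R.
  have e6 : (m + k - 1)%:R = nT%:R + 2 * nN%:R - 1 :> R by lra.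
  rewrite (natrM R (m - k) (m + k - 1)) e6 -hnT.
  have -> : \sum_(j < m | (k <= j)%N) `|f j| = \sum_(j < m | T j) `|f j| by [].
  move: hmain hA hB; set x := nT%:R; set y := nN%:R; nra.
case: m f m1 hf => [//|m'] f _ hf htail.
pose d := fun j : nat => `|f (inord j)|.
pose e := fun j => d j - lambda1.
have hd : forall i j, (i <= j)%N -> (j < m'.+1)%N -> d i <= d j.
  move=> i j ij jm; apply: hf; rewrite /= !inordK //; lia.
have H : forall s : pred nat, \sum_(j < m'.+1 | s j) e j <= lambda2 * Pm R m'.+1 (cnt m'.+1 s).
  move=> s; have hsub := @subset_top R m'.+1 d hd m'.+1 (leqnn _) s.
  have hn := cnt_le m'.+1 s.
  rewrite /e sumrB sum_cst.
  have [n0|npos] := eqVneq (cnt m'.+1 s) 0%N.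
    move: hsub; rewrite n0 subn0 [X in _ <= X]big_pred0; last first.
      by move=> j; apply/negP => h; have := ltn_ord j; lia.
    by rewrite PmE !mul0r mulr0 subr0.
  set n := cnt m'.+1 s in hsub hn npos *.
  have hk : (m'.+1 - n < m'.+1)%N by lia.
  have := htail _ hk.
  have -> : \sum_(j < m'.+1 | (m'.+1 - n <= j)%N) `|f j| =
      \sum_(j < m'.+1 | (m'.+1 - n <= j)%N) d j.
    by apply: eq_bigr => j _; rewrite /d inord_val.
  have e1 : (m'.+1 - (m'.+1 - n) = n)%N by lia.
  have e2 : (m'.+1 + (m'.+1 - n) - 1 + n + 1 = 2 * m'.+1)%N by lia.
  have e2R := congr1 (fun x => x%:R : R) e2.
  rewrite /= !natrD natrM in e2R.
  have e3 : (m'.+1 + (m'.+1 - n) - 1)%:R = 2 * (m'.+1)%:R - n%:R - 1 :> R by lra.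
  rewrite e1 natrM PmE e3; lra.
have [a [ha0 [ha1 ha2]]] := @core R lambda2 hl2 m'.+1 e H.
pose Y := fun i : 'I_m'.+1 => lambda1 + \sum_(j < m'.+1 | j != i) a i j.
have hY : forall i, `|f i| <= Y i.
  move=> i; have := ha2 i (ltn_ord i); rewrite /e /d inord_val /Y; lra.
have hr : forall i, `|f i / Y i| <= 1.
  move=> i; have [Y0|Ypos] := eqVneq (Y i) 0.
    by rewrite Y0 invr0 mulr0 normr0.
  have Yp : 0 < Y i by rewrite lt_def Ypos /=; apply: le_trans (hY i).
  by rewrite normrM normfV (gtr0_norm Yp) ler_pdivrMr // mul1r.
have hfY : forall i, f i / Y i * Y i = f i.
  move=> i; have [Y0|Ypos] := eqVneq (Y i) 0; last by rewrite mulfVK.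
  have := hY i; rewrite Y0 normr_le0 => /eqP ->; by rewrite !mul0r.
have hal : forall i j : 'I_m'.+1, i != j -> a i j <= lambda2.
  by move=> i j ij; have := ha1 i j ij; have := ha0 j i; lra.
exists (fun i => - (f i / Y i) * lambda1), (fun i j => - (f i / Y i) * a i j).
split.
  move=> i; rewrite normrM normrN (ger0_norm hl1).
  have := hr i; have := normr_ge0 (f i / Y i); nra.
split.
  move=> i j ij; rewrite normrM normrN (ger0_norm (ha0 i j)).
  have := hr i; have := normr_ge0 (f i / Y i); have := hal i j ij; have := ha0 i j; nra.
split.
  move=> i j ij; rewrite !normrM !normrN (ger0_norm (ha0 i j)) (ger0_norm (ha0 j i)).
  have := hr i; have := normr_ge0 (f i / Y i); have := hr j; have := normr_ge0 (f j / Y j).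
  have := ha1 i j ij; have := ha0 i j; have := ha0 j i; nra.
move=> i; rewrite -mulr_sumr.
have := hfY i; rewrite /Y mulrDr; lra.
Qed.
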